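(* Let $0<p_0,p_1,q_0,q_1\le\infty$, $s\in\mathbb R$ and $t>d(1/p_0-1/p_1)_+$. Then there is $c>0$ such that for all $n\in\mathbb N$ $$ b_n(I,b^{s+t}_{p_0,q_0},b^s_{p_1,q_1})\ge c\begin{cases}n^{-t/d}, & 0<p_0\le p_1\le\infty,\\ n^{-t/d+1/p_0-1/p_1}, & 0<p_1<p_0\le\infty.\end{cases} $$
   Context: Sequence spaces: $\nabla=(\nabla_j)_{j\ge0}$ finite subsets of $\{1,\dots,2^d-1\}\times\mathbb Z^d$ with $C_1\le2^{-jd}|\nabla_j|\le C_2$ for all $j\ge J$ (some $0<C_1\le C_2$, $J\in\mathbb N$); $b^s_{p,q}=b^s_{p,q}(\nabla)$ is the space of sequences $a=(a_{j,\lambda})$ with $\|a\|_{b^s_{p,q}}=\big(\sum_{j\ge0}2^{j(s+d(1/2-1/p))q}(\sum_{\lambda\in\nabla_j}|a_{j,\lambda}|^p)^{q/p}\big)^{1/q}<\infty$ (sup if $q=\infty$). $I$ is the identity embedding. Bernstein widths: $b_n(I,F,Y)$ is the supremum of all $r\ge0$ such that the unit ball of $F$ contains $\{y\in V:\|y\|_Y\le r\}$ for some $(n+1)$-dimensional subspace $V$. *)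

(* Defs.v *)
From HB Require Import structures.
From mathcomp Require Import all_boot all_order all_algebra.
From mathcomp Require Import all_classical all_reals all_analysis.
Set Implicit Arguments. Unset Strict Implicit. Unset Printing Implicit Defensive.
Import Order.TTheory GRing.Theory Num.Theory.
Local Open Scope ring_scope.

(* wavelet-type index lambda = (e, k) with e in {1,...,2^d-1}, k in Z^d *)
Definition idx (d : nat) := (nat * {ffun 'I_d -> int})%type.

Definition admissible_nabla (R : realType) (d : nat) (nabla : nat -> seq (idx d)) : Prop :=
  (forall j, uniq (nabla j)) /\
  (forall j l, l \in nabla j -> (1 <= l.1 <= 2 ^ d - 1)%N) /\
  exists (C1 C2 : R) (J : nat), 0 < C1 /\ C1 <= C2 /\
    forall j, (J <= j)%N ->
      C1 <= (2%:R ^- (j * d)) * (size (nabla j))%:R <= C2.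

Definition invp (R : realType) (p : \bar R) : R :=
  match p with EFin r => r^-1 | _ => 0 end.

(* sequences a = (a_{j,lambda}); only the values on nabla_j matter *)
Definition seqsp (R : realType) (d : nat) := nat -> idx d -> R.

Definition supported (R : realType) (d : nat) (nabla : nat -> seq (idx d))
  (a : seqsp R d) : Prop :=
  forall j l, l \notin nabla j -> a j l = 0.

Definition lp_level (R : realType) (d : nat) (nabla : nat -> seq (idx d))
  (p : \bar R) (a : seqsp R d) (j : nat) : R :=
  match p with
  | EFin r => (\sum_(l <- nabla j) `|a j l| `^ r) `^ r^-1
  | _ => \big[Num.max/0]_(l <- nabla j) `|a j l|
  end.

Definition bweight (R : realType) (d : nat) (nabla : nat -> seq (idx d))
  (s : R) (p : \bar R) (a : seqsp R d) (j : nat) : R :=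
  (2 `^ (j%:R * (s + d%:R * (2^-1 - invp p)))) * lp_level nabla p a j.

Definition bnorm (R : realType) (d : nat) (nabla : nat -> seq (idx d))
  (s : R) (p q : \bar R) (a : seqsp R d) : \bar R :=
  match q with
  | EFin r => ((\sum_(0 <= j <oo) ((bweight nabla s p a j `^ r)%:E)) `^ r^-1)%E
  | _ => ereal_sup (range (fun j => (bweight nabla s p a j)%:E))
  end.

Definition lincomb (R : realType) (d m : nat) (f : 'I_m -> seqsp R d)
  (c : 'I_m -> R) : seqsp R d :=
  fun j l => \sum_(i < m) c i * f i j l.

(* f_0,...,f_{m-1} are linearly independent elements of b^s_{p,q}(nabla);
   their span is an m-dimensional subspace of b^s_{p,q}(nabla) *)
Definition indep_family (R : realType) (d m : nat) (nabla : nat -> seq (idx d))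
  (s : R) (p q : \bar R) (f : 'I_m -> seqsp R d) : Prop :=
  (forall i, supported nabla (f i) /\ (bnorm nabla s p q (f i) < +oo)%E) /\
  (forall c : 'I_m -> R, (forall j l, lincomb f c j l = 0) -> forall i, c i = 0).

(* Bernstein width b_n(I, b^{sF}_{pF,qF}, b^{sY}_{pY,qY}):
   sup of r >= 0 such that for some (n+1)-dimensional subspace V of F,
   {y in V : ||y||_Y <= r} is contained in the unit ball of F. *)
Definition bernstein_width (R : realType) (d : nat) (nabla : nat -> seq (idx d))
  (sF : R) (pF qF : \bar R) (sY : R) (pY qY : \bar R) (n : nat) : \bar R :=
  ereal_sup [set (r%:E)%E | r in
    [set r : R | 0 <= r /\
      exists f : 'I_n.+1 -> seqsp R d,
        indep_family nabla sF pF qF f /\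
        forall c : 'I_n.+1 -> R,
          (bnorm nabla sY pY qY (lincomb f c) <= r%:E)%E ->
          (bnorm nabla sF pF qF (lincomb f c) <= 1)%E]].

(* Main.v *)
Require Import Defs.
From HB Require Import structures.
From mathcomp Require Import all_boot all_order all_algebra.
From mathcomp Require Import all_classical all_reals all_analysis.
Import Order.TTheory GRing.Theory Num.Theory.
Local Open Scope ring_scope.
From mathcomp Require Import ring lra.
Section P.
Variable R : realType.

Lemma powRK (x r : R) : 0 <= x -> r != 0 -> (x `^ r) `^ r^-1 = x.
Proof. by move=> x0 r0; rewrite -powRrM mulfV // powRr1. Qed.

Lemma powRKV (x r : R) : 0 <= x -> r != 0 -> (x `^ r^-1) `^ r = x.
Proof. by move=> x0 r0; rewrite -powRrM mulVf // powRr1. Qed.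

Lemma powR_le (r x y : R) : 0 <= r -> 0 <= x -> x <= y -> x `^ r <= y `^ r.
Proof.
move=> r0 x0 xy; apply: (ge0_ler_powR r0) => //; rewrite nnegrE //.
exact: le_trans xy.
Qed.

Lemma amgm (a b rho : R) : 0 <= a -> 0 <= b -> 0 < rho -> rho <= 1 ->
  a `^ rho * b `^ (1 - rho) <= rho * a + (1 - rho) * b.
Proof.
move=> a0 b0 r0 r1; have [->|r1'] := eqVneq rho 1.
  by rewrite subrr powRr0 mulr1 powRr1 // mul1r mul0r addr0.
have r1s : rho < 1 by rewrite lt_neqAle r1' r1.
have q0 : 0 < 1 - rho by rewrite subr_gt0.
have := @conjugate_powR R (a `^ rho) (b `^ (1 - rho)) rho^-1 (1 - rho)^-1
  (powR_ge0 _ _) (powR_ge0 _ _).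
rewrite !invr_gt0 q0 r0 !invrK => /(_ isT isT (subrKC _ _)).
rewrite !powRK ?gt_eqF //.
by rewrite [_ * a]mulrC [_ * b]mulrC.
Qed.

Variable T : eqType.
Implicit Types (s : seq T) (F : T -> R).

Lemma sum_ge_term s F l : (forall x, 0 <= F x) -> l \in s -> F l <= \sum_(x <- s) F x.
Proof.
move=> F0; elim: s => //= x s IH; rewrite in_cons big_cons => /predU1P[->|/IH h].
  by rewrite lerDl sumr_ge0.
by rewrite (le_trans h) // lerDr.
Qed.

Lemma sum_le_const s F y : (forall x, x \in s -> F x <= y) ->
  \sum_(x <- s) F x <= (size s)%:R * y.
Proof.
elim: s => [|x s IH] H; first by rewrite big_nil mul0r.
rewrite big_cons /= -addn1 natrD mulrDl mul1r addrC lerD //.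
  by apply: IH => l ls; apply: H; rewrite in_cons ls orbT.
by apply: H; rewrite mem_head.
Qed.

Lemma sum_const_seq s (c : R) : \sum_(x <- s) c = (size s)%:R * c.
Proof.
elim: s => [|x s IH]; first by rewrite big_nil mul0r.
by rewrite big_cons IH /= -addn1 natrD mulrDl mul1r addrC.
Qed.

Lemma bm_ge0 s F : 0 <= \big[Num.max/0]_(l <- s) F l.
Proof. by elim: s => [|x s IH]; rewrite ?big_nil // big_cons le_max IH orbT. Qed.

Lemma bm_ge s F l : l \in s -> F l <= \big[Num.max/0]_(x <- s) F x.
Proof.
elim: s => //= x s IH; rewrite in_cons big_cons => /predU1P[->|/IH h].
  by rewrite le_max lexx.
by rewrite le_max h orbT.
Qed.

Lemma bm_le s F y : 0 <= y -> (forall l, l \in s -> F l <= y) ->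
  \big[Num.max/0]_(x <- s) F x <= y.
Proof.
move=> y0; elim: s => [|x s IH] H; rewrite ?big_nil // big_cons ge_max H ?mem_head //=.
by apply: IH => l ls; apply: H; rewrite in_cons ls orbT.
Qed.

Definition Sp s F r := \sum_(x <- s) F x `^ r.
Definition Lp s F r := Sp s F r `^ r^-1.
Definition Mx s F := \big[Num.max/0]_(x <- s) F x.

Lemma Sp_ge0 s F r : 0 <= Sp s F r.
Proof. by apply: sumr_ge0 => x _; exact: powR_ge0. Qed.

Lemma Lp_ge0 s F r : 0 <= Lp s F r.
Proof. exact: powR_ge0. Qed.

Lemma M_le_L s F r : (forall x, 0 <= F x) -> 0 < r -> Mx s F <= Lp s F r.
Proof.
move=> F0 r0; apply: bm_le; first exact: Lp_ge0.
move=> l ls; rewrite -[F l](@powRK _ r) ?gt_eqF //.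
apply: powR_le; rewrite ?invr_ge0 ?(ltW r0) ?powR_ge0 //.
by rewrite /Sp; apply: (@sum_ge_term s (fun x => F x `^ r) l _ ls) => x; exact: powR_ge0.
Qed.

Lemma L_le_M s F r : (forall x, 0 <= F x) -> 0 < r ->
  Lp s F r <= (size s)%:R `^ r^-1 * Mx s F.
Proof.
move=> F0 r0; rewrite -[Mx s F](@powRK _ r) ?gt_eqF ?bm_ge0 //.
rewrite -powRM ?powR_ge0 //.
apply: powR_le; rewrite ?invr_ge0 ?(ltW r0) ?Sp_ge0 //.
apply: sum_le_const => x xs; apply: powR_le; rewrite ?(ltW r0) //.
exact: bm_ge.
Qed.

Lemma L_mono s F r0 r1 : (forall x, 0 <= F x) -> 0 < r1 -> r1 <= r0 ->
  Lp s F r0 <= Lp s F r1.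
Proof.
move=> F0 r10 r10'; have r00 : 0 < r0 by apply: lt_le_trans r10'.
set L1 := Lp s F r1.
have HS : Sp s F r0 <= L1 `^ r0.
  have -> : L1 `^ r0 = L1 `^ (r0 - r1) * Sp s F r1.
    rewrite -[Sp s F r1](@powRKV _ r1) ?Sp_ge0 ?gt_eqF // -/(Lp s F r1) -/L1.
    by rewrite -powRD subrK // gt_eqF.
  rewrite /Sp mulr_sumr big_seq [X in _ <= X]big_seq; apply: ler_sum => x xs.
  rewrite (_ : F x `^ r0 = F x `^ (r0 - r1) * F x `^ r1); last first.
    by rewrite -powRD subrK // gt_eqF.
  apply: ler_wpM2r; first exact: powR_ge0.
  apply: powR_le; rewrite ?subr_ge0 //.
  by apply: (le_trans _ (M_le_L s F r1 F0 r10)); exact: (bm_ge s F x xs).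
rewrite /Lp -/L1; have L10 : 0 <= L1 by exact: Lp_ge0.
rewrite -(@powRK L1 r0 L10); last by rewrite gt_eqF.
by apply: powR_le => //; [rewrite invr_ge0; exact: ltW | exact: Sp_ge0].
Qed.

Lemma L_pm s F r0 r1 : (forall x, 0 <= F x) -> 0 < r0 -> r0 <= r1 ->
  Lp s F r0 <= (size s)%:R `^ (r0^-1 - r1^-1) * Lp s F r1.
Proof.
move=> F0 r00 r01; have r10 : 0 < r1 by apply: lt_le_trans r01.
set rho := r0 / r1.
have rho0 : 0 < rho by rewrite divr_gt0.
have rho1 : rho <= 1 by rewrite ler_pdivrMr // mul1r.
set N : R := (size s)%:R; set Y := Sp s F r1.
have N0 : 0 <= N by rewrite ler0n.
have Y0 : 0 <= Y by exact: Sp_ge0.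
have Fr0 x : F x `^ r0 = (F x `^ r1) `^ rho.
  by rewrite -powRrM /rho mulrCA mulfV ?gt_eqF // mulr1.
have key : Sp s F r0 <= N `^ (1 - rho) * Y `^ rho.
  have [Yz|Ynz] := eqVneq Y 0.
    rewrite /Sp big_seq big1 ?mulr_ge0 ?powR_ge0 // => x xs.
    have : F x `^ r1 <= Y by rewrite /Y /Sp; apply: (@sum_ge_term s (fun x => F x `^ r1) x _ xs) => z; exact: powR_ge0.
    rewrite Yz => h; rewrite Fr0; have -> : F x `^ r1 = 0 by apply/le_anti; rewrite h powR_ge0.
    by rewrite powR0 // gt_eqF.
  have Ygt0 : 0 < Y by rewrite lt_neqAle eq_sym Ynz Y0.
  have Ngt0 : 0 < N.
    rewrite lt_neqAle N0 andbT eq_sym; apply/eqP => /eqP; rewrite /N pnatr_eq0 size_eq0 => /eqP sn.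
    by move: Ynz; rewrite /Y /Sp sn big_nil eqxx.
  set P := N `^ rho * Y `^ (1 - rho).
  have P0 : 0 < P by rewrite mulr_gt0 // powR_gt0.
  rewrite -(ler_pM2l P0).
  have -> : P * (N `^ (1 - rho) * Y `^ rho) = N * Y.
    rewrite /P mulrACA -powRD; last by rewrite subrKC oner_eq0.
    rewrite mulrC -powRD; last by rewrite subrK oner_eq0.
    by rewrite subrKC subrK !powRr1 // mulrC.
  have -> : N * Y = \sum_(x <- s) (rho * (N * F x `^ r1) + (1 - rho) * Y).
    rewrite big_split /= -!mulr_sumr sum_const_seq -/N -/(Sp s F r1) -/Y.
    by rewrite -mulrDl subrKC mul1r.
  rewrite /Sp mulr_sumr; apply: ler_sum => x _.
  have := @amgm (N * F x `^ r1) Y rho (mulr_ge0 N0 (powR_ge0 (F x) r1)) Y0 rho0 rho1.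
  rewrite powRM ?powR_ge0 // -Fr0 => h; apply: le_trans h.
  by rewrite /P mulrAC.
rewrite /Lp -/Y.
have ir0 : 0 <= r0^-1 by rewrite invr_ge0 ltW.
apply: le_trans; first exact: (powR_le _ _ _ ir0 (Sp_ge0 s F r0) key).
rewrite powRM ?powR_ge0 // -!powRrM.
have -> : (1 - rho) * r0^-1 = r0^-1 - r1^-1.
  by rewrite /rho mulrBl mul1r mulrAC mulfV ?gt_eqF // mul1r.
have -> : rho * r0^-1 = r1^-1.
  by rewrite /rho mulrAC mulfV ?gt_eqF // mul1r.
by [].
Qed.
End P.

Section B.
Variable R : realType.
Variable d : nat.
Variable nabla : nat -> seq (idx d).

Lemma lp_level_ge0 (p : \bar R) (a : seqsp R d) j : 0 <= lp_level nabla p a j.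
Proof. by case: p => [r| |] /=; [exact: powR_ge0 | exact: bm_ge0 | exact: bm_ge0]. Qed.

Lemma lp_level_zero (p : \bar R) (a : seqsp R d) j : (0 < p)%E ->
  (forall l, a j l = 0) -> lp_level nabla p a j = 0.
Proof.
case: p => [r| |] //= r0 a0.
  rewrite lte_fin in r0.
  rewrite big1 ?powR0 // ?invr_eq0 ?gt_eqF // => l _.
  by rewrite a0 normr0 powR0 // gt_eqF.
apply/le_anti; rewrite bm_ge0 andbT; apply: bm_le => // l _.
by rewrite a0 normr0.
Qed.

Lemma bweight_ge0 s (p : \bar R) a j : 0 <= bweight nabla s p a j.
Proof. by rewrite /bweight mulr_ge0 ?powR_ge0 ?lp_level_ge0. Qed.

Lemma bnorm_single s (p q : \bar R) (a : seqsp R d) j0 : (0 < p)%E -> (0 < q)%E ->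
  (forall j l, j != j0 -> a j l = 0) ->
  bnorm nabla s p q a = (bweight nabla s p a j0)%:E.
Proof.
move=> p0 q0 a0.
have bw0 j : j != j0 -> bweight nabla s p a j = 0.
  by move=> jj0; rewrite /bweight lp_level_zero ?mulr0 // => l; exact: a0.
case: q q0 => [r| |] //= q0.
  rewrite lte_fin in q0.
  rewrite (@nneseries_split _ _ 0 j0.+1); last by move=> k _; rewrite lee_fin powR_ge0.
  rewrite eseries0; last first.
    by move=> i; rewrite add0n => ij _; rewrite bw0 ?powR0 ?gt_eqF // gtn_eqF.
  rewrite adde0 add0n big_nat_recr //= big1_seq ?add0e; last first.
    move=> i /andP[_]; rewrite mem_index_iota => /andP[_ ij].
    rewrite bw0; last by rewrite ltn_eqF. by rewrite powR0 // gt_eqF.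
  by rewrite poweR_EFin powRK ?bweight_ge0 ?gt_eqF.
apply/le_anti/andP; split.
  apply: ge_ereal_sup => _ [j _ <-].
  have [->|jj0] := eqVneq j j0; first by [].
  by rewrite bw0 // lee_fin bweight_ge0.
by apply: ereal_sup_ubound; exists j0.
Qed.

End B.

Section H.
Variable R : realType.

Lemma invp_ge0 (p : \bar R) : (0 < p)%E -> 0 <= invp p.
Proof. by case: p => [r||] //=; rewrite lte_fin => r0; rewrite invr_ge0 ltW. Qed.

Lemma invp_le (p0 p1 : \bar R) : (0 < p0)%E -> (0 < p1)%E -> (p0 <= p1)%E ->
  invp p1 <= invp p0.
Proof.
case: p0 => [r0||] //; case: p1 => [r1||] //= h0 h1; rewrite ?lte_fin ?lee_fin in h0 h1 * => h.
- by rewrite lef_pV2 ?posrE.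
- by rewrite invr_ge0 ltW.
Qed.

Lemma invp_lt (p0 p1 : \bar R) : (0 < p0)%E -> (0 < p1)%E -> (p1 < p0)%E ->
  invp p0 < invp p1.
Proof.
case: p0 => [r0||] //; case: p1 => [r1||] //= h0 h1; rewrite ?lte_fin in h0 h1 * => h.
- by rewrite ltf_pV2 ?posrE.
- by rewrite invr_gt0.
Qed.

Lemma ratio d (nabla : nat -> seq (idx d)) (p0 p1 : \bar R) (a : seqsp R d) j :
  (0 < p0)%E -> (0 < p1)%E ->
  lp_level nabla p0 a j <=
  (size (nabla j))%:R `^ (Num.max 0 (invp p0 - invp p1)) * lp_level nabla p1 a j.
Proof.
have F0 : forall l, 0 <= (fun l => `|a j l|) l by move=> l; exact: normr_ge0.
case: p0 => [r0||] //; case: p1 => [r1||] //= h0 h1; rewrite ?lte_fin in h0 h1.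
- have [r10|r01] := lerP r1 r0.
    have -> : Num.max 0 (r0^-1 - r1^-1) = 0.
      by apply/max_idPl; rewrite subr_le0 lef_pV2 ?posrE.
    rewrite powRr0 mul1r; exact: (@L_mono R _ (nabla j) (fun l => `|a j l|) r0 r1 F0 h1 r10).
  have -> : Num.max 0 (r0^-1 - r1^-1) = r0^-1 - r1^-1.
    by apply/max_idPr; rewrite subr_ge0 lef_pV2 ?posrE // ltW.
  exact: (@L_pm R _ (nabla j) (fun l => `|a j l|) r0 r1 F0 h0 (ltW r01)).
- rewrite subr0; have -> : Num.max 0 r0^-1 = r0^-1 by apply/max_idPr; rewrite invr_ge0 ltW.
  exact: (@L_le_M R _ (nabla j) (fun l => `|a j l|) r0 F0 h0).
- have -> : Num.max 0 (0 - r1^-1) = 0.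
    by apply/max_idPl; rewrite sub0r oppr_le0 invr_ge0 ltW.
  rewrite powRr0 mul1r; exact: (@M_le_L R _ (nabla j) (fun l => `|a j l|) r1 F0 h1).
- rewrite subrr maxxx powRr0 mul1r; exact: lexx.
Qed.

Lemma pow2X (d j : nat) (y : R) : (0 < d)%N ->
  2 `^ (j%:R * y) = (2 ^+ (j * d)) `^ (y / d%:R).
Proof.
move=> d0; rewrite -powR_mulrn ?ler0n // -powRrM; congr (_ `^ _).
by rewrite natrM mulrCA -mulrA mulrCA mulfV ?mulr1 // pnatr_eq0 -lt0n.
Qed.

Lemma choose_j (C1 : R) (J d n : nat) : 0 < C1 -> (0 < d)%N -> (0 < n)%N ->
  exists j0, (J <= j0)%N /\ (n.+1)%:R <= C1 * 2 ^+ (j0 * d) /\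
    (2 : R) ^+ (j0 * d) <= (2 ^+ (J * d) + 2 ^+ d.+1 / C1) * n%:R.
Proof.
move=> C10 d0 n0.
pose P k := ((n.+1)%:R <= C1 * 2 ^+ ((J + k) * d) :> R).
have exP : exists k, P k.
  exists (Num.bound ((n.+1)%:R / C1)); rewrite /P.
  set k := Num.bound _.
  have hk := archi_boundP (divr_ge0 (ler0n R n.+1) (ltW C10)).
  rewrite -ler_pdivrMl // mulrC; apply: (le_trans (ltW hk)).
  rewrite -natrX ler_nat; apply: (leq_trans (ltnW (ltn_expl k (isT : (1 < 2)%N)))).
  apply: leq_pexp2l => //; apply: (leq_trans (leq_addl J k)).
  by rewrite leq_pmulr.
case: (ex_minnP exP) => k Pk minP.
exists (J + k)%N; split; first exact: leq_addr.
split; first exact: Pk.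
have nR : (1 : R) <= n%:R by rewrite ler1n.
have X0 : (0 : R) <= 2 ^+ (J * d) by rewrite exprn_ge0.
have Y0 : (0 : R) <= 2 ^+ d.+1 / C1 by rewrite divr_ge0 ?exprn_ge0 ?ltW.
case: k Pk minP => [|k'] Pk minP.
  rewrite addn0 mulrDl; apply: ler_wpDr; first by rewrite mulr_ge0 ?ler0n.
  by rewrite -[X in X <= _]mulr1 ler_wpM2l.
have nPk : ~~ P k' by apply/negP => /minP; rewrite ltnn.
rewrite /P -ltNge in nPk.
rewrite mulrDl; apply: ler_wpDl; first by rewrite mulr_ge0 ?ler0n.
have -> : ((J + k'.+1) * d = (J + k') * d + d)%N by rewrite addnS mulSn addnC.
rewrite exprD.
set X := (2 : R) ^+ ((J + k') * d).
have h1 : X <= n.+1%:R / C1 by rewrite ler_pdivlMr // mulrC ltW.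
have h2 : (n.+1%:R : R) <= 2 * n%:R by rewrite -natrM ler_nat mul2n -addnn -addn1 leq_add2l.
set u := C1^-1.
have u0 : 0 < u by rewrite invr_gt0.
have D0 : (0 : R) < 2 ^+ d by rewrite exprn_gt0.
rewrite exprS /= -/u in h1 *.
have h3 : n.+1%:R * u <= 2 * n%:R * u by rewrite ler_wpM2r // ltW.
have h4 := le_trans h1 h3.
have h5 : X * 2 ^+ d <= 2 * n%:R * u * 2 ^+ d by rewrite ler_wpM2r // ltW.
apply: (le_trans h5); rewrite le_eqVlt; apply/orP; left; apply/eqP.
by ring.
Qed.

End H.

Theorem lemma5 (R : realType) (d : nat) (nabla : nat -> seq (idx d))
  (p0 p1 q0 q1 : \bar R) (s t : R) :
  (0 < d)%N ->
  admissible_nabla R nabla ->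
  (0 < p0)%E -> (p0 <= +oo)%E -> (0 < p1)%E -> (p1 <= +oo)%E ->
  (0 < q0)%E -> (q0 <= +oo)%E -> (0 < q1)%E -> (q1 <= +oo)%E ->
  d%:R * Num.max 0 (invp p0 - invp p1) < t ->
  exists c : R, 0 < c /\
    forall n : nat, (0 < n)%N ->
      ((c * (if (p0 <= p1)%E then n%:R `^ (- t / d%:R)
             else n%:R `^ (- t / d%:R + invp p0 - invp p1)))%:E
       <= bernstein_width nabla (s + t) p0 q0 s p1 q1 n)%E.
Proof.
move=> d0 [uniqN [_ [C1 [C2 [J [C10 [C12 Hadm]]]]]]] p00 _ p10 _ q00 _ q10 _ ht.
have ratio0 := @ratio R d nabla p0 p1.
set i0 := invp p0 in ht ratio0 *. set i1 := invp p1 in ht ratio0 *.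
set del := i0 - i1 in ht ratio0 *. set dp := Num.max 0 del in ht ratio0 *.
have dp0 : 0 <= dp by rewrite le_max lexx.
have ddp : del <= dp by rewrite le_max lexx orbT.
have dR : (0 : R) < d%:R by rewrite ltr0n.
have t0 : 0 < t by apply: le_lt_trans ht; rewrite mulr_ge0 // ler0n.
have C20 : 0 < C2 by apply: lt_le_trans C12.
set E := t / d%:R - del + dp.
have E0 : 0 <= E.
  rewrite /E -addrA; apply: addr_ge0; first by rewrite divr_ge0 // ltW.
  by rewrite addrC subr_ge0.
set K : R := 2 ^+ (J * d) + 2 ^+ d.+1 / C1.
have K0 : 0 < K by rewrite addr_gt0 ?divr_gt0 ?exprn_gt0.
exists (C2 `^ dp * K `^ E)^-1; split; first by rewrite invr_gt0 mulr_gt0 ?powR_gt0.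
move=> n n0.
have He : (if (p0 <= p1)%E then n%:R `^ (- t / d%:R)
             else n%:R `^ (- t / d%:R + i0 - i1)) = n%:R `^ (- E).
  case: ifP => h; congr (_ `^ _).
    have del0 : 0 <= del by rewrite subr_ge0; exact: invp_le.
    rewrite /E (_ : dp = del); last by apply/max_idPr.
    by rewrite subrK mulNr.
  have h' : (p1 < p0)%E by rewrite ltNge h.
  have del0 : del < 0 by rewrite subr_lt0; exact: invp_lt.
  rewrite /E (_ : dp = 0); last by apply/max_idPl; exact: ltW.
  by rewrite addr0 opprB mulNr /del; ring.
rewrite He.
have [j0 [Jj0 [Hn HX]]] := @choose_j R C1 J d n C10 d0 n0.
set X : R := 2 ^+ (j0 * d) in Hn HX.
have X0 : 0 < X by rewrite exprn_gt0.
set N := size (nabla j0).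
have /andP[HC1 HC2] := Hadm j0 Jj0.
rewrite -/N -/X in HC1 HC2.
have XN1 : C1 * X <= N%:R by rewrite -ler_pdivlMr // mulrC.
have XN2 : N%:R <= C2 * X by rewrite -ler_pdivrMr // mulrC.
have HN : (n.+1 <= N)%N by rewrite -(ler_nat R); exact: le_trans Hn XN1.
pose l0 : idx d := (0%N, [ffun=> 0%R]).
pose f : 'I_n.+1 -> seqsp R d := fun i j l =>
  if (j == j0) && (l == nth l0 (nabla j0) i) then 1 else 0.
have fsing i j l : j != j0 -> f i j l = 0 by move=> jj; rewrite /f (negbTE jj).
have lc0 c j l : j != j0 -> lincomb f c j l = 0.
  by move=> jj; rewrite /lincomb big1 // => i _; rewrite fsing ?mulr0.
have iN (i : 'I_n.+1) : (i < N)%N by apply: leq_trans (ltn_ord i) HN.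
have lcnth c (i : 'I_n.+1) : lincomb f c j0 (nth l0 (nabla j0) i) = c i.
  rewrite /lincomb (bigD1 i) //= /f !eqxx mulr1 big1 ?addr0 // => k ki.
  rewrite /= nth_uniq; [ | exact: iN | exact: iN | exact: uniqN].
  by case: eqP => [/val_inj ik|_]; [by rewrite ik eqxx in ki | by rewrite mulr0].
set A0 := 2 `^ (j0%:R * (s + t + d%:R * (2^-1 - i0))).
set A1 := 2 `^ (j0%:R * (s + d%:R * (2^-1 - i1))).
set KN := N%:R `^ dp.
have A00 : 0 < A0 by rewrite powR_gt0.
have A10 : 0 < A1 by rewrite powR_gt0.
have N0 : (0 < N)%N by apply: leq_trans HN.
have KN0 : 0 < KN by rewrite powR_gt0 // ltr0n.
set r := A1 / (A0 * KN).
have r0 : 0 <= r by rewrite divr_ge0 // ltW // mulr_gt0.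
have bound : A0 * KN <= A1 * (C2 `^ dp * K `^ E) * n%:R `^ E.
  have eA0 : A0 = A1 * X `^ (t / d%:R - del).
    have -> : X `^ (t / d%:R - del) = 2 `^ (j0%:R * (t - d%:R * del)).
      rewrite (@pow2X R d j0 _ d0); congr (_ `^ _).
      by field; rewrite pnatr_eq0 -lt0n.
    rewrite /A0 /A1 -powRD; last by rewrite pnatr_eq0 implybT.
    by congr (_ `^ _); rewrite /del; ring.
  have hKN : KN <= C2 `^ dp * X `^ dp.
    by rewrite -powRM ?(ltW C20) ?(ltW X0) //; apply: powR_le; rewrite ?ler0n.
  have hXE : X `^ E <= K `^ E * n%:R `^ E.
    by rewrite -powRM ?(ltW K0) ?ler0n //; apply: powR_le => //; exact: ltW.
  rewrite eA0 -!mulrA; apply: ler_wpM2l; first exact: ltW.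
  apply: (le_trans (ler_wpM2l (powR_ge0 _ _) hKN)).
  rewrite mulrCA -powRD; last by rewrite (gt_eqF X0) implybT.
  rewrite -/E; apply: ler_wpM2l; first exact: powR_ge0.
  exact: hXE.
set Q := C2 `^ dp * K `^ E.
have Q0 : 0 < Q by rewrite mulr_gt0 // powR_gt0.
have nE0 : 0 < n%:R `^ E by rewrite powR_gt0 // ltr0n.
have cr : Q^-1 * n%:R `^ (- E) <= r.
  rewrite /r ler_pdivlMr ?mulr_gt0 // powRN.
  have eq : Q^-1 * (n%:R `^ E)^-1 * (A1 * Q * n%:R `^ E) = A1.
    by field; rewrite !gt_eqF.
  rewrite -[X in _ <= X]eq; apply: ler_wpM2l; last exact: bound.
  by rewrite mulr_ge0 // invr_ge0 ltW.
apply: (@le_trans _ _ r%:E); first by rewrite lee_fin.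
apply: ereal_sup_ubound; exists r => //; split => //.
exists f; split.
  split.
    move=> i; split.
      move=> j l; rewrite /f; case: ifP => // /andP[/eqP -> /eqP ->].
      by rewrite (mem_nth _ (iN i)).
    rewrite (@bnorm_single R d nabla (s + t) p0 q0 (f i) j0) //; first exact: ltry.
    by move=> j l; exact: fsing.
  by move=> c Hc i; rewrite -(lcnth c i); exact: Hc.
move=> c.
rewrite !(@bnorm_single R d nabla _ _ _ (lincomb f c) j0) //; try (move=> j l; exact: lc0).
rewrite !lee_fin /bweight -/i0 -/i1 -/A0 -/A1 => hY.
have hr := ratio0 (lincomb f c) j0 p00 p10; rewrite -/N -/KN in hr.
set L0 := lp_level nabla p0 (lincomb f c) j0 in hr *.
set L1 := lp_level nabla p1 (lincomb f c) j0 in hr hY.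
have L1b : L1 <= (A0 * KN)^-1 by rewrite -(ler_pM2l A10).
apply: (le_trans (ler_wpM2l (ltW A00) hr)).
rewrite mulrA; have -> : 1 = A0 * KN * (A0 * KN)^-1 by rewrite mulfV // gt_eqF // mulr_gt0.
by apply: ler_wpM2l => //; rewrite mulr_ge0 // ltW.
Qed.
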